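(* Let $\sigma_a$ be any attacker mixed strategy and $0<\epsilon\le n$. Run the greedy algorithm on the function $g(\cdot\mid\sigma_a)$ with a budget of $\ln\left(\frac{n}{\epsilon}\right)k_d$ elements, producing a set $S_d$. Then $$\mathbb{E}_{S_a\sim\sigma_a}[f(S_d,S_a)]\le\min_{|S^*|\le k_d}\mathbb{E}_{S_a\sim\sigma_a}[f(S^*,S_a)]+\epsilon.$$
   Context: Setting: $n$ voters $V$, channels $C$, edge probabilities $p_{uv},q_{uv}\in[0,1]$ (0 for non-edges), known preferences $\theta_v\in\{0,1\}$, and $f(S_d,S_a)=\sum_{v\in V}\theta_v\left(\prod_{u\in S_d}(1-q_{uv})\right)\left(1-\prod_{u\in S_a}(1-p_{uv})\right)$. An attacker mixed strategy $\sigma_a$ is a distribution over subsets of $C$ of size at most $k_a$. Define $g(S_d\mid\sigma_a)=\mathbb{E}_{S_a\sim\sigma_a}[f(\emptyset,S_a)-f(S_d,S_a)]$. The greedy algorithm with budget $B$ starts from $\emptyset$ and for $B$ steps adds a channel maximizing the marginal gain of $g$. *)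

(* Defs.v *)
From HB Require Import structures.
From mathcomp Require Import all_boot all_order all_algebra.
From mathcomp Require Import reals exp.
Set Implicit Arguments. Unset Strict Implicit. Unset Printing Implicit Defensive.
Import Order.TTheory GRing.Theory Num.Theory.
Local Open Scope ring_scope.

Section Defs.
Variables (R : realType) (V C : finType).

(* Influence objective: p u v, q u v are edge probabilities from channel u to
   voter v (attacker / defender), theta v the known preference. *)
Definition f (p q : C -> V -> R) (theta : V -> bool)
    (Sd Sa : {set C}) : R :=
  \sum_(v : V) (theta v)%:R *
     ((\prod_(u in Sd) (1 - q u v)) * (1 - \prod_(u in Sa) (1 - p u v))).

Definition attacker_mixed (ka : nat) (sigma : {set C} -> R) : Prop :=
  (forall S : {set C}, 0 <= sigma S) /\ (\sum_(S : {set C}) sigma S = 1) /\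
  (forall S : {set C}, (ka < #|S|)%N -> sigma S = 0).

Definition expected_f p q theta (sigma : {set C} -> R) (Sd : {set C}) : R :=
  \sum_(Sa : {set C}) sigma Sa * f p q theta Sd Sa.

Definition g p q theta (sigma : {set C} -> R) (Sd : {set C}) : R :=
  \sum_(Sa : {set C}) sigma Sa * (f p q theta set0 Sa - f p q theta Sd Sa).

Definition greedy_run (h : {set C} -> R) (B : nat) (s : seq C) : Prop :=
  size s = B /\
  forall (i : nat) (c0 : C), (i < B)%N ->
    let Si := [set x in take i s] in
    forall c : C,
      h (c |: Si) - h Si <= h (nth c0 s i |: Si) - h Si.

End Defs.

(* Main.v *)
Require Import Defs.
From HB Require Import structures.
From mathcomp Require Import all_boot all_order all_algebra.
From mathcomp Require Import reals exp sequences.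
From mathcomp Require Import lra ring.
Import Order.TTheory GRing.Theory Num.Theory.
Local Open Scope ring_scope.
Set Implicit Arguments. Unset Strict Implicit.

Section Helpers.
Variables (R : realType) (V C : finType) (q : C -> V -> R) (v : V).
Hypothesis hq : forall u v, 0 <= q u v <= 1.

Definition PP (S : {set C}) : R := \prod_(u in S) (1 - q u v).

Lemma PP01 S : 0 <= PP S <= 1.
Proof.
rewrite /PP; apply: (big_ind (fun x : R => 0 <= x <= 1)) => //.
- by rewrite ler01 lexx.
- move=> x y /andP[x0 x1] /andP[y0 y1]; rewrite mulr_ge0 //= mulr_ile1 //.
- move=> u _; have /andP[a b] := hq u v; apply/andP; split; lra.
Qed.

Lemma PP_split (A B : {set C}) : A \subset B -> PP B = PP A * PP (B :\: A).
Proof.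
move=> sAB; rewrite /PP (big_setID A) /=.
by rewrite (setIidPr sAB).
Qed.

Lemma PP_mono (A B : {set C}) : A \subset B -> PP B <= PP A.
Proof.
move=> sAB; rewrite (PP_split sAB).
have /andP[a0 a1] := PP01 A; have /andP[b0 b1] := PP01 (B :\: A).
by rewrite ler_piMr.
Qed.

Lemma union_bound (A : {set C}) : 1 - PP A <= \sum_(c in A) q c v.
Proof.
suff [] : (0 <= PP A <= 1) /\ 1 - PP A <= \sum_(c in A) q c v by [].
rewrite /PP.
pose K := (fun x y : R => (0 <= x <= 1) /\ 1 - x <= y).
apply: (@big_rec2 R R K 1 *%R 0 +%R).
- by split; [rewrite ler01 lexx | rewrite subrr].
- move=> i x y _ [/andP[x0 x1] h]; have /andP[a b] := hq i v; split.
    by rewrite mulr_ge0 ?subr_ge0 //= mulr_ile1 ?subr_ge0 //; lra.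
  nra.
Qed.

Lemma PP_add1 (c : C) (T : {set C}) : c \notin T -> PP (c |: T) = PP T * (1 - q c v).
Proof.
move=> cT; rewrite (PP_split (subsetUr [set c] T)).
have -> : (c |: T) :\: T = [set c].
  apply/setP => x; rewrite !inE; case: (eqVneq x c) => [->|_]; rewrite ?cT //=.
  by case: (x \in T).
by rewrite /PP big_set1.
Qed.

Lemma key (T S : {set C}) : PP T - PP S <= \sum_(c in S) (PP T - PP (c |: T)).
Proof.
apply: (le_trans (y := PP T - PP (S :|: T))).
  by apply: lerB => //; apply: PP_mono; exact: subsetUl.
rewrite (PP_split (subsetUr S T)).
have -> : (S :|: T) :\: T = S :\: T by rewrite setDUl setDv setU0.
apply: (le_trans (y := PP T * \sum_(c in S :\: T) q c v)).
  have /andP[a0 _] := PP01 T.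
  rewrite -{1}(mulr1 (PP T)) -mulrBr ler_wpM2l //; exact: union_bound.
rewrite [X in _ <= X](big_setID T) /= -[X in X <= _]add0r; apply: lerD.
  apply: sumr_ge0 => c _; rewrite subr_ge0; apply: PP_mono; exact: subsetUr.
rewrite mulr_sumr; apply: ler_sum => c; rewrite !inE => /andP[cT _].
rewrite PP_add1 //; lra.
Qed.

End Helpers.

Section Main.
Variables (R : realType) (V C : finType) (p q : C -> V -> R) (theta : V -> bool)
  (sigma : {set C} -> R).
Hypothesis hp : forall u v, 0 <= p u v <= 1.
Hypothesis hq : forall u v, 0 <= q u v <= 1.
Hypothesis hs0 : forall S, 0 <= sigma S.
Hypothesis hs1 : \sum_(S : {set C}) sigma S = 1.

Definition w (v : V) : R :=
  \sum_(Sa : {set C}) sigma Sa * ((theta v)%:R * (1 - PP p v Sa)).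

Let G := g p q theta sigma.

Lemma gdiff (X Y : {set C}) : G X - G Y = \sum_(v : V) w v * (PP q v Y - PP q v X).
Proof.
rewrite /G /g -sumrB.
under [RHS]eq_bigr do rewrite /w mulr_suml.
rewrite [RHS]exchange_big /=; apply: eq_bigr => Sa _.
rewrite /f -!sumrB -mulrBr; rewrite -sumrB mulr_sumr.
apply: eq_bigr => v _; rewrite /PP; ring.
Qed.

Lemma g0 : G set0 = 0.
Proof. by rewrite /G /g big1 // => Sa _; rewrite subrr mulr0. Qed.

Lemma w01 v : 0 <= w v <= 1.
Proof.
apply/andP; split.
  apply: sumr_ge0 => Sa _; apply: mulr_ge0 => //; apply: mulr_ge0 => //.
  by have /andP[b0 b1] := PP01 v hp Sa; rewrite subr_ge0.
rewrite -hs1; apply: ler_sum => Sa _.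
rewrite -[X in _ <= X]mulr1; apply: ler_wpM2l => //.
have /andP[b0 b1] := PP01 v hp Sa.
case: (theta v); rewrite ?mul1r ?mul0r; lra.
Qed.

Lemma gmono (X Y : {set C}) : Y \subset X -> G Y <= G X.
Proof.
move=> sYX; rewrite -subr_ge0 gdiff; apply: sumr_ge0 => v _.
have /andP[a0 _] := w01 v; apply: mulr_ge0 => //.
by rewrite subr_ge0; apply: (PP_mono v hq).
Qed.

Lemma gkey (T S : {set C}) : G S - G T <= \sum_(c in S) (G (c |: T) - G T).
Proof.
rewrite gdiff.
rewrite (eq_bigr (fun c => \sum_(v : V) w v * (PP q v T - PP q v (c |: T))));
  last by move=> c _; rewrite gdiff.
rewrite exchange_big /=; apply: ler_sum => v _.
rewrite -mulr_sumr; have /andP[a0 _] := w01 v; apply: ler_wpM2l => //.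
exact: (key v hq).
Qed.

Lemma g_bounds (S : {set C}) : 0 <= G S <= #|V|%:R.
Proof.
apply/andP; split; first by rewrite -g0; apply: gmono; exact: sub0set.
rewrite -[G S]subr0 -g0 gdiff.
have -> : #|V|%:R = \sum_(v : V) (1 : R) by rewrite sumr_const.
apply: ler_sum => v _.
have /andP[a0 a1] := w01 v; have /andP[b0 b1] := PP01 v hq S.
have -> : PP q v set0 = 1 by rewrite /PP big_set0.
rewrite -[X in _ <= X]mulr1; apply: ler_pM => //; lra.
Qed.

Lemma expf_g (X : {set C}) : expected_f p q theta sigma X =
  \sum_(Sa : {set C}) sigma Sa * f p q theta set0 Sa - G X.
Proof.
rewrite /G /g /expected_f -sumrB; apply: eq_bigr => Sa _; ring.
Qed.

End Main.

Theorem mainTheorem5 (R : realType) (V C : finType)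
    (p q : C -> V -> R) (theta : V -> bool) (ka kd : nat)
    (sigma : {set C} -> R) (eps : R) (B : nat) (s : seq C) :
  (forall u v, 0 <= p u v <= 1) ->
  (forall u v, 0 <= q u v <= 1) ->
  attacker_mixed ka sigma ->
  0 < eps -> eps <= #|V|%:R ->
  (* B = ceil(ln(n / eps) * kd), the budget of the greedy algorithm *)
  B%:R - 1 < ln (#|V|%:R / eps) * kd%:R ->
  ln (#|V|%:R / eps) * kd%:R <= B%:R ->
  greedy_run (g p q theta sigma) B s ->
  forall Sstar : {set C}, (#|Sstar| <= kd)%N ->
    expected_f p q theta sigma [set x in s]
      <= expected_f p q theta sigma Sstar + eps.
Proof.
move=> hp hq [hs0 [hs1 _]] eps0 epsn hB1 hB2 [hsize hgr] Sstar hS.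
set n := (#|V|%:R : R) in epsn hB1 hB2 *.
set G := g p q theta sigma in hgr *.
rewrite !(expf_g p q theta sigma).
suff : G Sstar - G [set x in s] <= eps by rewrite -/G; lra.
case: kd hS hB1 hB2 => [|kd] hS hB1 hB2.
  have B0 : B = 0%N.
    have : (B%:R : R) < 1%:R by move: hB1; rewrite mulr0; lra.
    by rewrite ltr_nat; case: B {hsize hgr hB1 hB2}.
  move: hsize; rewrite B0 => /size0nil ->.
  have -> : Sstar = set0 by apply: cards0_eq; move: hS; rewrite leqn0 => /eqP.
  have -> : [set x in [::] : seq C] = set0 by apply/setP => x; rewrite !inE.
  by rewrite subrr ltW.
set K := (kd.+1%:R : R).
have K0 : 0 < K by rewrite ltr0n.
have K1 : 1 <= K by rewrite ler1n.
pose Si i := [set x in take i s].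
pose D i := G Sstar - G (Si i).
have step : forall i, (i < B)%N -> K * D i.+1 <= (K - 1) * D i.
  move=> i hi.
  have c0 : C by move: hi; rewrite -hsize; case: (s) => [|x] //.
  have hS1 : Si i.+1 = nth c0 s i |: Si i.
    rewrite /Si (take_nth c0); last by rewrite hsize.
    by apply/setP => x; rewrite !inE mem_rcons in_cons.
  have hg := hgr i c0 hi.
  set d := G (Si i.+1) - G (Si i).
  have d0 : 0 <= d by rewrite subr_ge0 hS1; apply: (gmono theta hp hq hs0 hs1); exact: subsetUr.
  have hDd : D i <= K * d.
    apply: le_trans (gkey theta hp hq hs0 hs1 (Si i) Sstar) _.
    apply: (le_trans (y := \sum_(c in Sstar) d)).
      by apply: ler_sum => c _; rewrite /d hS1; exact: hg.
    rewrite sumr_const -mulr_natl; apply: ler_wpM2r => //.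
    by rewrite ler_nat.
  have -> : D i.+1 = D i - d by rewrite /D /d; ring.
  nra.
have iter : forall i, (i <= B)%N -> D i <= (1 - K^-1) ^+ i * D 0%N.
  elim=> [|i IH] hi; first by rewrite expr0 mul1r.
  have := step i hi; have := IH (ltnW hi) => h1 h2.
  have r0 : 0 <= 1 - K^-1 by rewrite subr_ge0 invf_le1.
  apply: (le_trans (y := (1 - K^-1) * D i)); last first.
    by rewrite exprS -mulrA; apply: ler_wpM2l.
  rewrite -(ler_pM2l K0).
  have -> : K * ((1 - K^-1) * D i) = (K - 1) * D i.
    rewrite mulrA; congr (_ * _); field.
    apply/negP => /eqP h; have : (0:R) <= kd%:R := ler0n _ _; lra.
  exact: h2.
have D0 : D 0%N = G Sstar.
  have e : [set x in [::] : seq C] = set0 by apply/setP => x; rewrite !inE.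
  by rewrite /D /Si take0 e /G (g0 p q theta sigma) subr0.
have hDB := iter B (leqnn B).
have -> : [set x in s] = Si B by rewrite /Si -hsize take_size.
have /andP[gS0 gSn] := g_bounds theta hp hq hs0 hs1 Sstar.
have n0 : 0 < n by apply: lt_le_trans epsn.
have r0 : 0 <= 1 - K^-1 by rewrite subr_ge0 invf_le1.
have hr : (1 - K^-1) ^+ B <= eps / n.
  apply: (le_trans (y := expR (- K^-1) ^+ B)).
    apply: lerXn2r; rewrite ?nnegrE ?expR_ge0 //.
    exact: expR_ge1Dx.
  rewrite -expRM_natl.
  have hpos : n / eps \is Num.pos by rewrite posrE divr_gt0.
  apply: (le_trans (y := expR (- ln (n / eps)))).
    rewrite ler_expR mulrN lerN2 ler_pdivlMr //.
  by rewrite expRN lnK // invf_div.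
apply: (le_trans (y := (1 - K^-1) ^+ B * D 0%N)) => //.
rewrite D0.
apply: (le_trans (y := eps / n * G Sstar)); first by apply: ler_wpM2r.
apply: (le_trans (y := eps / n * n)).
  by apply: ler_wpM2l => //; rewrite divr_ge0 // ltW.
by rewrite divfK ?gt_eqF.
Qed.
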